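(* Let $N\ge1$ and let $q,\gamma,s_0,\xi_0$ be generic nonzero complex numbers; set $u_0=(s_0\xi_0\gamma)^{-1}$. Define $$\mathsf z(u,v)=\frac{(1-\gamma)(q-\gamma s_0^2)(1-uv)+(1-q)(1-\gamma\xi_0s_0u)(1-\gamma\xi_0^{-1}s_0v)}{(1-uv)(1-quv)}.$$ Then, with $u_i=u_0q^{i-1}$ for $i=1,\dots,N$ and generic $v_1,\dots,v_N$, $$\frac{\prod_{i,j=1}^N(1-u_iv_j)(1-qu_iv_j)}{\prod_{1\le i<j\le N}(u_i-u_j)(v_i-v_j)}\det[\mathsf z(u_i,v_j)]_{i,j=1}^N=q^{N^2}\prod_{i,j=1}^N\Big(1-v_i\frac{q^{j-1}}{s_0\xi_0\gamma}\Big)\prod_{j=1}^N(1-\gamma q^{-j+1})(1-s_0^2\gamma q^{-j}).$$ *)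

(* Defs.v *)
From HB Require Import structures.
From mathcomp Require Import all_boot all_order all_algebra.
From mathcomp Require Import complex.
From mathcomp Require Import reals.
Set Implicit Arguments. Unset Strict Implicit. Unset Printing Implicit Defensive.
Import Order.TTheory GRing.Theory Num.Theory.
Local Open Scope ring_scope.

Definition zfun (C : fieldType) (q gamma s0 xi0 : C) (u v : C) : C :=
  ((1 - gamma) * (q - gamma * s0 ^+ 2) * (1 - u * v)
   + (1 - q) * (1 - gamma * xi0 * s0 * u) * (1 - gamma * xi0^-1 * s0 * v))
  / ((1 - u * v) * (1 - q * u * v)).

(* Main.v *)
Require Import Defs.
From HB Require Import structures.
From mathcomp Require Import all_boot all_order all_algebra.
From mathcomp Require Import complex.
From mathcomp Require Import reals.
From mathcomp Require Import ring.
Import Order.TTheory GRing.Theory Num.Theory.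
Local Open Scope ring_scope.

Lemma det_scale2 (F : comPzRingType) n (a b : 'I_n -> F) (M : 'M[F]_n) :
  \det (\matrix_(i,j) (a i * b j * M i j)) = (\prod_i a i) * (\prod_j b j) * \det M.
Proof.
have -> : \matrix_(i,j) (a i * b j * M i j) = diag_mx (\row_i a i) *m M *m diag_mx (\row_j b j).
  by apply/matrixP=> i j; rewrite mul_mx_diag mul_diag_mx !mxE mulrAC.
rewrite !det_mulmx !det_diag.
under eq_bigr do rewrite mxE.
under [X in _ * _ * X]eq_bigr do rewrite mxE.
by rewrite mulrAC.
Qed.

Lemma prod_split_full (F : comPzRingType) n (f : 'I_n.+1 -> 'I_n.+1 -> F) :
 \prod_i \prod_j f i j = f ord0 ord0 * (\prod_j f ord0 (lift ord0 j)) *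
   ((\prod_i f (lift ord0 i) ord0) * \prod_i \prod_j f (lift ord0 i) (lift ord0 j)).
Proof.
rewrite big_ord_recl; congr (_ * _); first by rewrite big_ord_recl.
rewrite -big_split; apply: eq_bigr => i _.
by rewrite big_ord_recl.
Qed.

Lemma prod_split_lt (F : comPzRingType) n (f : 'I_n.+1 -> 'I_n.+1 -> F) :
 \prod_(i < n.+1) \prod_(j < n.+1 | (i < j)%N) f i j =
  (\prod_j f ord0 (lift ord0 j)) *
   \prod_(i < n) \prod_(j < n | (i < j)%N) f (lift ord0 i) (lift ord0 j).
Proof.
rewrite big_ord_recl; congr (_ * _).
  by rewrite big_mkcond big_ord_recl /= mul1r.
apply: eq_bigr => i _.
rewrite big_mkcond big_ord_recl /= mul1r [RHS]big_mkcond.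
apply: eq_bigr => j _; rewrite /bump /=. by rewrite !add1n ltnS.
Qed.

Lemma lift0_neq0 n (i : 'I_n) : (lift ord0 i == ord0 :> 'I_n.+1) = false.
Proof. by apply/negbTE; rewrite eq_sym neq_lift. Qed.

Lemma cauchy (F : fieldType) n (x y : 'I_n -> F) :
  (forall i j, 1 - x i * y j != 0) ->
  \det (\matrix_(i,j) (1 - x i * y j)^-1) * \prod_i \prod_j (1 - x i * y j)
   = \prod_(i < n) \prod_(j < n | (i < j)%N) ((x i - x j) * (y i - y j)).
Proof.
elim: n x y => [|n IH] x y hxy.
  by rewrite det_mx00 !big_ord0 mulr1.
set A := \matrix_(i,j) _.
pose r := fun i : 'I_n.+1 => if i == ord0 then 0 else (1 - x ord0 * y ord0) / (1 - x i * y ord0).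
have r0 : r ord0 = 0 by rewrite /r eqxx.
have rl : forall i : 'I_n, r (lift ord0 i) = (1 - x ord0 * y ord0) / (1 - x (lift ord0 i) * y ord0).
  by move=> i; rewrite /r lift0_neq0.
pose E : 'M[F]_n.+1 := 1%:M - \matrix_(i,j) ((j == ord0)%:R * r i).
have detE : \det E = 1.
  rewrite det_trig.
    apply: big1 => i _; rewrite !mxE eqxx /r.
    by case: (i == ord0); rewrite ?mulr0 ?mul0r subr0.
  apply/is_trig_mxP => i j lij; rewrite !mxE.
  have -> : (i == j) = false by apply/negbTE; rewrite neq_ltn lij.
  have -> : (j == ord0) = false by apply/negbTE; rewrite -lt0n (leq_ltn_trans _ lij).
  by rewrite mul0r subrr.
have hB : \det (E *m A) = \det A by rewrite det_mulmx detE mul1r.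
have Bij : forall i j, (E *m A) i j = A i j - r i * A ord0 j.
  move=> i j; rewrite mulmxBl mul1mx !mxE; congr (_ - _).
  rewrite (bigD1 ord0) //= big1 ?addr0; first by rewrite !mxE eqxx mul1r.
  by move=> k /negbTE hk; rewrite !mxE hk mul0r mul0r.
rewrite -hB (expand_det_col _ ord0) [X in X * _]big_ord_recl big1; last first.
  move=> i _; rewrite Bij rl !mxE.
  have h1 := hxy (lift ord0 i) ord0; have h0 := hxy ord0 ord0.
  rewrite [X in X * _](_ : _ = 0) ?mul0r //; field; by rewrite ?h0 ?h1.
rewrite addr0 /cofactor expr0 mul1r.
pose x' := fun i : 'I_n => x (lift ord0 i).
pose y' := fun i : 'I_n => y (lift ord0 i).
pose al := fun i : 'I_n => (x' i - x ord0) / (1 - x' i * y ord0).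
pose be := fun j : 'I_n => (y' j - y ord0) / (1 - x ord0 * y' j).
have -> : row' ord0 (col' ord0 (E *m A)) =
   \matrix_(i,j) (al i * be j * (\matrix_(i,j) (1 - x' i * y' j)^-1) i j).
  apply/matrixP => i j.
  rewrite (_ : row' ord0 (col' ord0 (E *m A)) i j = (E *m A) (lift ord0 i) (lift ord0 j)); last by rewrite !mxE.
  rewrite Bij rl !mxE.
  rewrite /al /be /x' /y'.
  have h1 := hxy (lift ord0 i) ord0; have h0 := hxy ord0 ord0.
  have h2 := hxy (lift ord0 i) (lift ord0 j); have h3 := hxy ord0 (lift ord0 j).
  field; by rewrite ?h0 ?h1 ?h2 ?h3.
rewrite det_scale2.
have IH' := IH x' y' (fun i j => hxy _ _).
rewrite Bij r0 mul0r subr0 mxE.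
rewrite prod_split_full prod_split_lt -IH' /al /be !prodf_div.
have -> : \prod_(j < n) ((x ord0 - x (lift ord0 j)) * (y ord0 - y (lift ord0 j)))
   = \prod_(j < n) (x' j - x ord0) * \prod_(j < n) (y' j - y ord0).
  by rewrite -big_split; apply: eq_bigr => j _; by rewrite -mulrNN !opprB.
have n1 : \prod_(i < n) (1 - x' i * y ord0) != 0 by apply/prodf_neq0 => i _; apply: hxy.
have n2 : \prod_(j < n) (1 - x ord0 * y' j) != 0 by apply/prodf_neq0 => i _; apply: hxy.
have n3 := hxy ord0 ord0.
rewrite /x' /y' in n1 n2 *.
field.
by rewrite n1 n2 n3.
Qed.

Lemma entry_id (F : fieldType) (q gamma s0 xi0 v Q: F) :
  q != 0 -> gamma != 0 -> s0 != 0 -> xi0 != 0 -> Q != 0 ->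
  let u := (s0 * xi0 * gamma)^-1 * Q in
  1 - u * v != 0 -> 1 - q * u * v != 0 ->
  zfun q gamma s0 xi0 u v =
   (1 - Q) * (1 - gamma ^+ 2 * s0 ^+ 2 / Q) * (1 - u * v)^-1
   + (q * Q * ((1 - gamma / Q) * (1 - s0 ^+ 2 * gamma / (q * Q)))) * (1 - q * u * v)^-1.
Proof.
move=> hq hg hs hx hQ u h1 h2.
rewrite /zfun /u in h1 h2 *.
have c0 : s0 * xi0 * gamma != 0 by rewrite !mulf_neq0.
have k1 : s0 * xi0 * gamma - Q * v != 0.
  have -> : s0 * xi0 * gamma - Q * v = (s0 * xi0 * gamma) * (1 - (s0 * xi0 * gamma)^-1 * Q * v) by field; rewrite ?hg ?hs ?hx.
  by rewrite mulf_neq0.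
have k2 : s0 * xi0 * gamma - q * Q * v != 0.
  have -> : s0 * xi0 * gamma - q * Q * v = (s0 * xi0 * gamma) * (1 - q * ((s0 * xi0 * gamma)^-1 * Q) * v) by field; rewrite ?hg ?hs ?hx.
  by rewrite mulf_neq0.
field.
by rewrite hq hg hs hx hQ k1 k2.
Qed.

Theorem mainTheorem3 (R : realType) (N : nat) (q gamma s0 xi0 : R[i])
    (v : 'I_N -> R[i]) :
  (0 < N)%N ->
  q != 0 -> gamma != 0 -> s0 != 0 -> xi0 != 0 ->
  let u0 := (s0 * xi0 * gamma)^-1 in
  let u := fun i : 'I_N => u0 * q ^+ i in
  (forall i j : 'I_N, i != j -> u i != u j) ->
  (forall i j : 'I_N, i != j -> v i != v j) ->
  (forall i j : 'I_N, 1 - u i * v j != 0) ->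
  (forall i j : 'I_N, 1 - q * u i * v j != 0) ->
  (\prod_(i < N) \prod_(j < N) ((1 - u i * v j) * (1 - q * u i * v j)))
    / (\prod_(i < N) \prod_(j < N | (i < j)%N) ((u i - u j) * (v i - v j)))
    * \det (\matrix_(i < N, j < N) zfun q gamma s0 xi0 (u i) (v j))
  = q ^+ (N ^ 2)
    * (\prod_(i < N) \prod_(j < N) (1 - v i * q ^+ j / (s0 * xi0 * gamma)))
    * \prod_(j < N) ((1 - gamma / q ^+ j) * (1 - s0 ^+ 2 * gamma / q ^+ j.+1)).
Proof.
move=> hN hq hg hs hx u0 u hu hv h1 h2.
pose e := fun i : 'I_N => (1 - gamma / q ^+ i) * (1 - s0 ^+ 2 * gamma / q ^+ i.+1).
pose dd := fun i : 'I_N => q ^+ i.+1 * e i.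
pose cc := fun i : nat => (1 - q ^+ i) * (1 - gamma ^+ 2 * s0 ^+ 2 / q ^+ i).
pose x := fun i : 'I_N => q * u i.
pose G := \matrix_(i < N, j < N) (1 - x i * v j)^-1.
pose T := \matrix_(i < N, k < N) (if k == i then dd i else if (k.+1 == i)%N then cc i else 0).
have hZ : \matrix_(i < N, j < N) zfun q gamma s0 xi0 (u i) (v j) = T *m G.
  apply/matrixP => i j; rewrite !mxE.
  rewrite (bigD1 i) //= !mxE eqxx.
  have -> : \sum_(k < N | k != i) T i k * G k j = cc i * (1 - u i * v j)^-1.
    case Hi: (nat_of_ord i) => [|m].
      rewrite /cc expr0 subrr !mul0r.
      by apply: big1 => k hk; rewrite !mxE (negbTE hk) Hi /= mul0r.
    have hm : (m < N)%N by rewrite (leq_trans _ (ltn_ord i)) // Hi.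
    rewrite (bigD1 (Ordinal hm)) /=; last by rewrite -val_eqE /= Hi ltn_eqF.
    rewrite big1 ?addr0; last first.
      move=> k /andP [hk1 hk2]; rewrite !mxE (negbTE hk1) Hi eqSS.
      by move: hk2; rewrite -val_eqE /= => /negbTE ->; rewrite mul0r.
    rewrite !mxE.
    have -> : (Ordinal hm == i) = false by rewrite -val_eqE /= Hi ltn_eqF.
    rewrite Hi eqxx /x /u /= Hi exprS.
    by rewrite mulrCA.
  have := @entry_id _ q gamma s0 xi0 (v j) (q ^+ i) hq hg hs hx (expf_neq0 i hq) (h1 i j) (h2 i j).
  rewrite /= => ->.
  by rewrite /dd /e /cc [q ^+ i.+1]exprS addrC.
have detT : \det T = \prod_i dd i.
  rewrite det_trig; last first.
    apply/is_trig_mxP => i k lik; rewrite mxE.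
    have -> : (k == i) = false by rewrite -val_eqE /= gtn_eqF.
    by rewrite (gtn_eqF (leqW lik)).
  by apply: eq_bigr => i _; rewrite mxE eqxx.
have hG := @cauchy _ _ x v (fun i j => h2 i j).
rewrite hZ det_mulmx detT.
set PU := \prod_(i < N) \prod_(j < N) (1 - u i * v j).
set Q' := \prod_(i < N) \prod_(j < N) (1 - x i * v j).
set D := \prod_(i < N) \prod_(j < N | (i < j)%N) ((u i - u j) * (v i - v j)).
set Qq := \prod_(i < N) \prod_(j < N | (i < j)%N) q.
have -> : \prod_(i < N) \prod_(j < N) ((1 - u i * v j) * (1 - q * u i * v j)) = PU * Q'.
  by rewrite -big_split; apply: eq_bigr => i _; rewrite big_split.
have hP : \prod_(i < N) \prod_(j < N | (i < j)%N) ((x i - x j) * (v i - v j)) = Qq * D.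
  rewrite -big_split; apply: eq_bigr => i _; rewrite -big_split; apply: eq_bigr => j _.
  by rewrite /x -mulrBr /= mulrA.
have nD : D != 0.
  apply/prodf_neq0 => i _; apply/prodf_neq0 => j hij.
  rewrite mulf_neq0 // subr_eq0; [apply: hu | apply: hv];
    by rewrite -val_eqE /= neq_ltn hij.
have nQ : Q' != 0 by apply/prodf_neq0 => i _; apply/prodf_neq0 => j _; apply: h2.
have hdG : \det G = Qq * D / Q' by rewrite -hP -hG mulfK.
rewrite hdG.
have -> : PU * Q' / D * (\prod_i dd i * (Qq * D / Q')) = PU * (\prod_i dd i) * Qq.
  by field; rewrite nD nQ.
have -> : \prod_i dd i = (\prod_(i < N) q ^+ i.+1) * \prod_i e i by rewrite -big_split.
have hq2 : (\prod_(i < N) q ^+ i.+1) * Qq = q ^+ (N ^ 2).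
  rewrite /Qq -big_split /=.
  have -> : \prod_(i < N) (q ^+ i.+1 * \prod_(j < N | (i < j)%N) q) = \prod_(i < N) q ^+ N.
    apply: eq_bigr => i _.
    have -> : q ^+ i.+1 = \prod_(j < N | (j < i.+1)%N) q.
      by rewrite -(big_ord_widen _ (fun _ => q) (ltn_ord i)) prodr_const card_ord.
    rewrite mulrC [RHS](_ : _ = \prod_(j < N) q); last by rewrite prodr_const card_ord.
    rewrite [RHS](bigID (fun j : 'I_N => (i < j)%N)) /=; congr (_ * _).
    by apply: eq_bigl => j; rewrite ltnS leqNgt.
  by rewrite prodr_const card_ord -exprM.
have hPU : PU = \prod_(i < N) \prod_(j < N) (1 - v i * q ^+ j / (s0 * xi0 * gamma)).
  rewrite /PU exchange_big; apply: eq_bigr => i _; apply: eq_bigr => j _.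
  by rewrite /u /u0 mulrC mulrA mulrAC.
rewrite hPU -hq2.
set A := \prod_(i < N) \prod_(j < N) _.
set B := \prod_(i < N) q ^+ i.+1.
set E := \prod_i e i.
have key : forall a b c d : R[i], a * (b * c) * d = b * d * a * c by move=> *; ring.
exact: key.
Qed.
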